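(* Let $m>0$, $c>0$, $\hbar>0$, and let $\varphi(x,t)=\exp\!\big[R(x,t)+\tfrac{i}{\hbar}S(x,t)\big]$, $x\in\mathbb{R}^3$, $t\ge 0$, with $R,S$ smooth and real-valued, be a solution of the Klein–Gordon equation $$\Delta\varphi-\frac{1}{c^2}\frac{\partial^2\varphi}{\partial t^2}=\frac{m^2c^2}{\hbar^2}\varphi$$ such that $S$ satisfies $$\frac{\partial S}{\partial t}+c\sqrt{m^2c^2+\nabla S\cdot\nabla S}=0 .$$ Write $x_\nu=(x,x^4)$ with $x^4=ict$, set $\tilde S(x_\nu)=S(x,t)$, $\tilde R(x_\nu)=R(x,t)$, let $\nabla_\nu=(\nabla,\partial/\partial x^4)$ and $\Delta_\nu=\nabla_\nu\cdot\nabla_\nu$, and let $\Sigma^2=\begin{pmatrix}\frac{\hbar}{m}I_3&0\\0&0\end{pmatrix}$. Consider the diffusion $\tilde X_\nu(\tau)$ with forward Itô differential $$d\tilde X_\nu(\tau)=\Big(\tfrac1m\nabla_\nu\tilde S+\Sigma^2\nabla_\nu\tilde R\Big)(\tilde X_\nu(\tau))\,d\tau+\Sigma\, d\tilde W_\nu(\tau),$$ with $\tilde W_\nu$ a standard four-dimensional Wiener process (equivalently, spatial part $d\tilde X=\big(\tfrac1m\nabla S+\tfrac{\hbar}{m}\nabla R\big)d\tau+\sqrt{\hbar/m}\,d\tilde W$ and time part $dT=-\tfrac{1}{mc^2}\tfrac{\partial S}{\partial t}\,d\tau$ where $\tilde X^4=icT$). Then $\tilde\rho(x_\nu)=|\varphi(x_\nu)|^2$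 is a stationary solution of the associated Fokker–Planck equation $$\frac{\partial\rho_\nu}{\partial\tau}+\nabla_\nu\cdot\Big[\Big(\tfrac1m\nabla_\nu\tilde S+\Sigma^2\nabla_\nu\tilde R\Big)\rho_\nu\Big]=\tfrac12\Sigma^2\Delta_\nu\rho_\nu,$$ so that $\mu(dx_\nu)=\tilde\rho(x_\nu)\,dx_\nu$ is an invariant ($\sigma$-finite) measure for this process; moreover $\tilde\rho$ satisfies the covariant continuity equation $$\nabla_\nu\cdot\Big(\tilde\rho\,\tfrac1m\nabla_\nu\tilde S\Big)=0,$$ i.e. $\nabla\cdot(|\varphi|^2\nabla S)-\frac{1}{c^2}\frac{\partial}{\partial t}\big(|\varphi|^2\frac{\partial S}{\partial t}\big)=0$.
   Context: Here $\nabla$ and $\Delta$ denote the spatial gradient and Laplacian on $\mathbb{R}^3$, and $\partial/\partial x^4=\frac{1}{ic}\partial/\partial t$ under the identification $x^4=ict$. In the expression $\tfrac12\Sigma^2\Delta_\nu\rho_\nu$, the matrix $\Sigma^2$ acts so that only the spatial second derivatives appear, i.e. it equals $\frac{\hbar}{2m}\Delta\rho_\nu$. *)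

(* Defs.v *)
From Stdlib Require Import Reals List.
From Coquelicot Require Import Coquelicot.
Open Scope R_scope.

(* Real functions of (x1, x2, x3, t) : R^3 x R. *)
Definition fn4 := R -> R -> R -> R -> R.

(* Partial derivative in direction i: 0,1,2 = spatial x1,x2,x3; 3 (and above) = t. *)
Definition pd (i : nat) (f : fn4) : fn4 :=
  fun x1 x2 x3 t =>
    match i with
    | 0%nat => Derive (fun y => f y x2 x3 t) x1
    | 1%nat => Derive (fun y => f x1 y x3 t) x2
    | 2%nat => Derive (fun y => f x1 x2 y t) x3
    | _ => Derive (fun y => f x1 x2 x3 y) t
    end.

Definition ex_pd (i : nat) (f : fn4) (x1 x2 x3 t : R) : Prop :=
  match i with
  | 0%nat => ex_derive (fun y => f y x2 x3 t) x1
  | 1%nat => ex_derive (fun y => f x1 y x3 t) x2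
  | 2%nat => ex_derive (fun y => f x1 x2 y t) x3
  | _ => ex_derive (fun y => f x1 x2 x3 y) t
  end.

Fixpoint iter_pd (l : list nat) (f : fn4) : fn4 :=
  match l with
  | nil => f
  | i :: l' => pd i (iter_pd l' f)
  end.

Definition uncurry4 (f : fn4) : R * R * R * R -> R :=
  fun p => f (fst (fst (fst p))) (snd (fst (fst p))) (snd (fst p)) (snd p).

Definition smooth4 (f : fn4) : Prop :=
  forall (l : list nat) (x1 x2 x3 t : R),
    continuous (uncurry4 (iter_pd l f)) (x1, x2, x3, t) /\
    forall i : nat, ex_pd i (iter_pd l f) x1 x2 x3 t.

Definition lap (f : fn4) : fn4 :=
  fun x1 x2 x3 t =>
    pd 0 (pd 0 f) x1 x2 x3 t + pd 1 (pd 1 f) x1 x2 x3 t + pd 2 (pd 2 f) x1 x2 x3 t.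

Definition gradSq (f : fn4) : fn4 :=
  fun x1 x2 x3 t =>
    (pd 0 f x1 x2 x3 t) ^ 2 + (pd 1 f x1 x2 x3 t) ^ 2 + (pd 2 f x1 x2 x3 t) ^ 2.

(* phi = exp(R + i S / hbar), written by real and imaginary parts. *)
Definition phi_re (hb : R) (Rf Sf : fn4) : fn4 :=
  fun x1 x2 x3 t => exp (Rf x1 x2 x3 t) * cos (Sf x1 x2 x3 t / hb).
Definition phi_im (hb : R) (Rf Sf : fn4) : fn4 :=
  fun x1 x2 x3 t => exp (Rf x1 x2 x3 t) * sin (Sf x1 x2 x3 t / hb).

Definition rho (hb : R) (Rf Sf : fn4) : fn4 :=
  fun x1 x2 x3 t => (phi_re hb Rf Sf x1 x2 x3 t) ^ 2 + (phi_im hb Rf Sf x1 x2 x3 t) ^ 2.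

Definition KG_residual (m c hb : R) (f : fn4) : fn4 :=
  fun x1 x2 x3 t =>
    lap f x1 x2 x3 t - / c ^ 2 * pd 3 (pd 3 f) x1 x2 x3 t
    - m ^ 2 * c ^ 2 / hb ^ 2 * f x1 x2 x3 t.

Definition drift (m hb : R) (Rf Sf : fn4) (i : nat) : fn4 :=
  fun x1 x2 x3 t => / m * pd i Sf x1 x2 x3 t + hb / m * pd i Rf x1 x2 x3 t.

(* nabla_nu . [ ((1/m) nabla_nu S~ + Sigma^2 nabla_nu R~) rho ], written out with
   d/dx^4 = (1/(i c)) d/dt, Sigma^2 killing the 4th component:
   = sum_i d_i (drift_i rho) - (1/(m c^2)) d_t (rho d_t S). *)
Definition FP_flux_div (m c hb : R) (Rf Sf : fn4) (r : fn4) : fn4 :=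
  fun x1 x2 x3 t =>
    pd 0 (fun a b d e => drift m hb Rf Sf 0 a b d e * r a b d e) x1 x2 x3 t
  + pd 1 (fun a b d e => drift m hb Rf Sf 1 a b d e * r a b d e) x1 x2 x3 t
  + pd 2 (fun a b d e => drift m hb Rf Sf 2 a b d e * r a b d e) x1 x2 x3 t
  - / (m * c ^ 2) * pd 3 (fun a b d e => r a b d e * pd 3 Sf a b d e) x1 x2 x3 t.

Definition cov_cont (c : R) (Sf : fn4) (r : fn4) : fn4 :=
  fun x1 x2 x3 t =>
    pd 0 (fun a b d e => r a b d e * pd 0 Sf a b d e) x1 x2 x3 t
  + pd 1 (fun a b d e => r a b d e * pd 1 Sf a b d e) x1 x2 x3 t
  + pd 2 (fun a b d e => r a b d e * pd 2 Sf a b d e) x1 x2 x3 t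
  - / c ^ 2 * pd 3 (fun a b d e => r a b d e * pd 3 Sf a b d e) x1 x2 x3 t.

(* Main.v *)
Require Import Defs.
From Stdlib Require Import Reals.
From Coquelicot Require Import Coquelicot.
Open Scope R_scope.
From Stdlib Require Import Lra FunctionalExtensionality.
From Coquelicot Require Import Coquelicot.

Section OneVar.
Variables (h : R) (r s : R -> R).
Hypothesis Hr : forall y, ex_derive r y.
Hypothesis Hr2 : forall y, ex_derive (Derive r) y.
Hypothesis Hs : forall y, ex_derive s y.
Hypothesis Hs2 : forall y, ex_derive (Derive s) y.

Ltac fin := change (fun x => r x) with r in *; change (fun x => s x) with s in *;
  change (fun x => Derive r x) with (Derive r) in *; change (fun x => Derive s x) with (Derive s) in *;
  unfold Rdiv; ring.
Ltac sides := repeat (match goal with |- _ /\ _ => split end);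
  first [apply Hr | apply Hr2 | apply Hs | apply Hs2 | exact I].

Lemma D_re : Derive (fun y => exp (r y) * cos (s y / h)) =
  fun y => exp (r y) * (Derive r y * cos (s y / h) - Derive s y / h * sin (s y / h)).
Proof using All.
  apply functional_extensionality; intro y.
  apply is_derive_unique. auto_derive; [sides|fin].
Qed.

Lemma D_im : Derive (fun y => exp (r y) * sin (s y / h)) =
  fun y => exp (r y) * (Derive r y * sin (s y / h) + Derive s y / h * cos (s y / h)).
Proof using All.
  apply functional_extensionality; intro y.
  apply is_derive_unique. auto_derive; [sides|fin].
Qed.

Lemma DD_re y : Derive (Derive (fun y => exp (r y) * cos (s y / h))) y =
  exp (r y) * ((Derive (Derive r) y + Derive r y ^ 2 - (Derive s y / h) ^ 2) * cos (s y / h)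
   - (Derive (Derive s) y / h + 2 * Derive r y * Derive s y / h) * sin (s y / h)).
Proof using All.
  rewrite D_re. apply is_derive_unique. auto_derive; [sides|fin].
Qed.

Lemma DD_im y : Derive (Derive (fun y => exp (r y) * sin (s y / h))) y =
  exp (r y) * ((Derive (Derive r) y + Derive r y ^ 2 - (Derive s y / h) ^ 2) * sin (s y / h)
   + (Derive (Derive s) y / h + 2 * Derive r y * Derive s y / h) * cos (s y / h)).
Proof using All.
  rewrite D_im. apply is_derive_unique. auto_derive; [sides|fin].
Qed.

Lemma D_fp a b y : Derive (fun y => (a * Derive s y + b * Derive r y) * exp (2 * r y)) y =
  (a * Derive (Derive s) y + b * Derive (Derive r) y) * exp (2 * r y)
  + (a * Derive s y + b * Derive r y) * (2 * Derive r y * exp (2 * r y)).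
Proof using All. apply is_derive_unique. auto_derive; [sides|fin]. Qed.

Lemma D_cc y : Derive (fun y => exp (2 * r y) * Derive s y) y =
  2 * Derive r y * exp (2 * r y) * Derive s y + exp (2 * r y) * Derive (Derive s) y.
Proof using All. apply is_derive_unique. auto_derive; [sides|fin]. Qed.

Lemma D_e2 : Derive (fun y => exp (2 * r y)) = fun y => 2 * Derive r y * exp (2 * r y).
Proof using All.
  apply functional_extensionality; intro y.
  apply is_derive_unique. auto_derive; [sides|fin].
Qed.

Lemma DD_e2 y : Derive (Derive (fun y => exp (2 * r y))) y =
  (2 * Derive (Derive r) y + 4 * Derive r y ^ 2) * exp (2 * r y).
Proof using All. rewrite D_e2. apply is_derive_unique. auto_derive; [sides|fin]. Qed.
End OneVar.

Section Dir.
Variables (m hb : R) (Rf Sf : fn4).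
Hypothesis HR : smooth4 Rf.
Hypothesis HS : smooth4 Sf.

Ltac dcases i x1 x2 x3 t L :=
  destruct i as [|[|[|i]]];
  [ exact (L (fun y => Rf y x2 x3 t) (fun y => Sf y x2 x3 t)
        (fun y => proj2 (HR nil y x2 x3 t) 0%nat) (fun y => proj2 (HR (cons 0%nat nil) y x2 x3 t) 0%nat)
        (fun y => proj2 (HS nil y x2 x3 t) 0%nat) (fun y => proj2 (HS (cons 0%nat nil) y x2 x3 t) 0%nat) x1)
  | exact (L (fun y => Rf x1 y x3 t) (fun y => Sf x1 y x3 t)
        (fun y => proj2 (HR nil x1 y x3 t) 1%nat) (fun y => proj2 (HR (cons 1%nat nil) x1 y x3 t) 1%nat)
        (fun y => proj2 (HS nil x1 y x3 t) 1%nat) (fun y => proj2 (HS (cons 1%nat nil) x1 y x3 t) 1%nat) x2)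
  | exact (L (fun y => Rf x1 x2 y t) (fun y => Sf x1 x2 y t)
        (fun y => proj2 (HR nil x1 x2 y t) 2%nat) (fun y => proj2 (HR (cons 2%nat nil) x1 x2 y t) 2%nat)
        (fun y => proj2 (HS nil x1 x2 y t) 2%nat) (fun y => proj2 (HS (cons 2%nat nil) x1 x2 y t) 2%nat) x3)
  | exact (L (fun y => Rf x1 x2 x3 y) (fun y => Sf x1 x2 x3 y)
        (fun y => proj2 (HR nil x1 x2 x3 y) 3%nat) (fun y => proj2 (HR (cons 3%nat nil) x1 x2 x3 y) 3%nat)
        (fun y => proj2 (HS nil x1 x2 x3 y) 3%nat) (fun y => proj2 (HS (cons 3%nat nil) x1 x2 x3 y) 3%nat) t) ].

Lemma dir_re i x1 x2 x3 t : pd i (pd i (phi_re hb Rf Sf)) x1 x2 x3 t =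
  exp (Rf x1 x2 x3 t) * ((pd i (pd i Rf) x1 x2 x3 t + pd i Rf x1 x2 x3 t ^ 2 - (pd i Sf x1 x2 x3 t / hb) ^ 2) * cos (Sf x1 x2 x3 t / hb)
   - (pd i (pd i Sf) x1 x2 x3 t / hb + 2 * pd i Rf x1 x2 x3 t * pd i Sf x1 x2 x3 t / hb) * sin (Sf x1 x2 x3 t / hb)).
Proof. dcases i x1 x2 x3 t (DD_re hb). Qed.

Lemma dir_im i x1 x2 x3 t : pd i (pd i (phi_im hb Rf Sf)) x1 x2 x3 t =
  exp (Rf x1 x2 x3 t) * ((pd i (pd i Rf) x1 x2 x3 t + pd i Rf x1 x2 x3 t ^ 2 - (pd i Sf x1 x2 x3 t / hb) ^ 2) * sin (Sf x1 x2 x3 t / hb)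
   + (pd i (pd i Sf) x1 x2 x3 t / hb + 2 * pd i Rf x1 x2 x3 t * pd i Sf x1 x2 x3 t / hb) * cos (Sf x1 x2 x3 t / hb)).
Proof. dcases i x1 x2 x3 t (DD_im hb). Qed.

Lemma dir_fp i x1 x2 x3 t :
  pd i (fun a b d e => drift m hb Rf Sf i a b d e * exp (2 * Rf a b d e)) x1 x2 x3 t =
  (/ m * pd i (pd i Sf) x1 x2 x3 t + hb / m * pd i (pd i Rf) x1 x2 x3 t) * exp (2 * Rf x1 x2 x3 t)
  + (/ m * pd i Sf x1 x2 x3 t + hb / m * pd i Rf x1 x2 x3 t) * (2 * pd i Rf x1 x2 x3 t * exp (2 * Rf x1 x2 x3 t)).
Proof. dcases i x1 x2 x3 t (fun r s H1 H2 H3 H4 => D_fp hb r s H1 H2 H3 H4 (/ m) (hb / m)). Qed.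

Lemma dir_cc i x1 x2 x3 t :
  pd i (fun a b d e => exp (2 * Rf a b d e) * pd i Sf a b d e) x1 x2 x3 t =
  2 * pd i Rf x1 x2 x3 t * exp (2 * Rf x1 x2 x3 t) * pd i Sf x1 x2 x3 t
  + exp (2 * Rf x1 x2 x3 t) * pd i (pd i Sf) x1 x2 x3 t.
Proof. dcases i x1 x2 x3 t (D_cc hb). Qed.

Lemma dir_lap i x1 x2 x3 t :
  pd i (pd i (fun a b d e => exp (2 * Rf a b d e))) x1 x2 x3 t =
  (2 * pd i (pd i Rf) x1 x2 x3 t + 4 * pd i Rf x1 x2 x3 t ^ 2) * exp (2 * Rf x1 x2 x3 t).
Proof. dcases i x1 x2 x3 t (DD_e2 hb). Qed.
End Dir.

Lemma rho_eq hb Rf Sf : rho hb Rf Sf = fun a b d e => exp (2 * Rf a b d e).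
Proof.
  apply functional_extensionality; intro a; apply functional_extensionality; intro b;
  apply functional_extensionality; intro d; apply functional_extensionality; intro e.
  unfold rho, phi_re, phi_im.
  replace (2 * Rf a b d e) with (Rf a b d e + Rf a b d e) by ring.
  rewrite exp_plus.
  pose proof (sin2_cos2 (Sf a b d e / hb)). unfold Rsqr in H. nra.
Qed.


Theorem mainTheorem1 (m c hb : R) (Rf Sf : fn4) :
  0 < m -> 0 < c -> 0 < hb ->
  smooth4 Rf -> smooth4 Sf ->
  (* phi = exp(R + i S/hbar) solves Klein-Gordon (real and imaginary parts) *)
  (forall x1 x2 x3 t, 0 <= t -> KG_residual m c hb (phi_re hb Rf Sf) x1 x2 x3 t = 0) ->
  (forall x1 x2 x3 t, 0 <= t -> KG_residual m c hb (phi_im hb Rf Sf) x1 x2 x3 t = 0) ->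
  (* dS/dt + c sqrt(m^2 c^2 + grad S . grad S) = 0 *)
  (forall x1 x2 x3 t, 0 <= t ->
     pd 3 Sf x1 x2 x3 t + c * sqrt (m ^ 2 * c ^ 2 + gradSq Sf x1 x2 x3 t) = 0) ->
  (* stationary Fokker-Planck equation (d rho/d tau = 0) *)
  (forall x1 x2 x3 t, 0 <= t ->
     FP_flux_div m c hb Rf Sf (rho hb Rf Sf) x1 x2 x3 t
     = hb / (2 * m) * lap (rho hb Rf Sf) x1 x2 x3 t)
  /\
  (* covariant continuity equation *)
  (forall x1 x2 x3 t, 0 <= t -> cov_cont c Sf (rho hb Rf Sf) x1 x2 x3 t = 0).
Proof.
  intros Hm Hc Hh HR HS KGr KGi _.
  assert (K : forall x1 x2 x3 t, 0 <= t ->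
    (pd 0 (pd 0 Sf) x1 x2 x3 t + 2 * pd 0 Rf x1 x2 x3 t * pd 0 Sf x1 x2 x3 t)
  + (pd 1 (pd 1 Sf) x1 x2 x3 t + 2 * pd 1 Rf x1 x2 x3 t * pd 1 Sf x1 x2 x3 t)
  + (pd 2 (pd 2 Sf) x1 x2 x3 t + 2 * pd 2 Rf x1 x2 x3 t * pd 2 Sf x1 x2 x3 t)
  - / c ^ 2 * (pd 3 (pd 3 Sf) x1 x2 x3 t + 2 * pd 3 Rf x1 x2 x3 t * pd 3 Sf x1 x2 x3 t) = 0).
  { intros x1 x2 x3 t Ht.
    pose proof (KGr x1 x2 x3 t Ht) as E1. pose proof (KGi x1 x2 x3 t Ht) as E2.
    unfold KG_residual, lap in E1, E2.
    rewrite !(dir_re hb Rf Sf HR HS) in E1. rewrite !(dir_im hb Rf Sf HR HS) in E2.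
    unfold phi_re, phi_im in E1, E2.
    set (Sn := sin (Sf x1 x2 x3 t / hb)) in *. set (Cs := cos (Sf x1 x2 x3 t / hb)) in *.
    set (E := exp (Rf x1 x2 x3 t)) in *.
    pose proof (sin2_cos2 (Sf x1 x2 x3 t / hb)) as SC. unfold Rsqr in SC. fold Sn Cs in SC.
    assert (EP : 0 < E) by apply exp_pos.
    assert (hn : hb <> 0) by lra. assert (cn : c <> 0) by lra.
    match goal with |- ?k = 0 =>
      match type of E1 with ?a = 0 => match type of E2 with ?b = 0 =>
        assert (X : k * (E / hb) = - Sn * a + Cs * b)
        by (transitivity (k * (E / hb) * (Sn * Sn + Cs * Cs)); [rewrite SC; ring | field; auto]) end end end.
    rewrite E1, E2 in X.
    assert (Y : 0 < E / hb) by (apply Rdiv_lt_0_compat; auto).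
    nra. }
  split.
  - intros x1 x2 x3 t Ht. rewrite rho_eq. unfold FP_flux_div, lap. cbv beta.
    rewrite !(dir_fp m hb Rf Sf HR HS), !(dir_lap hb Rf Sf HR HS), !(dir_cc hb Rf Sf HR HS).
    apply Rminus_diag_uniq.
    rewrite <- (Rmult_0_r (exp (2 * Rf x1 x2 x3 t) / m)), <- (K x1 x2 x3 t Ht).
    field. split; lra.
  - intros x1 x2 x3 t Ht. rewrite rho_eq. unfold cov_cont. cbv beta.
    rewrite !(dir_cc hb Rf Sf HR HS).
    rewrite <- (Rmult_0_r (exp (2 * Rf x1 x2 x3 t))), <- (K x1 x2 x3 t Ht).
    field. lra.
Qed.
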